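(* Let $\Bbbk$ be a field of characteristic zero, $S=\Bbbk[x_1,\ldots,x_5]$, and let $I = (x_1^3,\dots , x_5^3, x_1^2x_2, x_1x_2^2)$ and $J = (x_1^3,\dots , x_5^3, x_1^2x_2, x_1x_2^2,x_3x_4x_5)$. Then $S/I$ and $S/J$ both fail the WLP in degree $4$.
   Context: For a monomial ideal $I$, $A=S/I$ fails the WLP in degree $i$ if $\times(x_1+\cdots+x_5): A_i\to A_{i+1}$ is neither injective nor surjective. *)

(* Defs.v *)
From mathcomp Require Import all_boot all_algebra.
From mathcomp Require Import mpoly.
Set Implicit Arguments. Unset Strict Implicit. Unset Printing Implicit Defensive.
Import GRing.Theory.
Local Open Scope ring_scope.

Definition in_ideal (F : fieldType) (n : nat) (gs : seq {mpoly F[n]})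
    (f : {mpoly F[n]}) : Prop :=
  exists c : 'I_(size gs) -> {mpoly F[n]}, f = \sum_(i < size gs) c i * gs`_i.

Definition lin_form (F : fieldType) (n : nat) : {mpoly F[n]} :=
  \sum_(i < n) 'X_i.

(* A = S/(gs); multiplication by l : A_d -> A_(d+1) is injective,
   written out on representatives: a homogeneous f of degree d with
   l*f = 0 in A satisfies f = 0 in A. *)
Definition mult_injective (F : fieldType) (n : nat) (gs : seq {mpoly F[n]})
    (l : {mpoly F[n]}) (d : nat) : Prop :=
  forall f : {mpoly F[n]}, f \is d.-homog ->
    in_ideal gs (l * f) -> in_ideal gs f.

(* multiplication by l : A_d -> A_(d+1) is surjective: every class of a
   homogeneous g of degree d+1 is l times the class of some homogeneous f
   of degree d. *)
Definition mult_surjective (F : fieldType) (n : nat) (gs : seq {mpoly F[n]})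
    (l : {mpoly F[n]}) (d : nat) : Prop :=
  forall g : {mpoly F[n]}, g \is d.+1.-homog ->
    exists f : {mpoly F[n]}, f \is d.-homog /\ in_ideal gs (g - l * f).

Definition fails_WLP_in_degree (F : fieldType) (n : nat)
    (gs : seq {mpoly F[n]}) (d : nat) : Prop :=
  ~ mult_injective gs (lin_form F n) d /\ ~ mult_surjective gs (lin_form F n) d.

(* variables x_1..x_5 are 'X_0 .. 'X_4 *)
Definition x5 (F : fieldType) (i : nat) : {mpoly F[5]} := 'X_(inord i).

Definition gens_I (F : fieldType) : seq {mpoly F[5]} :=
  [:: x5 F 0 ^+ 3; x5 F 1 ^+ 3; x5 F 2 ^+ 3; x5 F 3 ^+ 3; x5 F 4 ^+ 3;
      x5 F 0 ^+ 2 * x5 F 1; x5 F 0 * x5 F 1 ^+ 2].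

Definition gens_J (F : fieldType) : seq {mpoly F[5]} :=
  gens_I F ++ [:: x5 F 2 * x5 F 3 * x5 F 4].

(* Main.v *)
Require Import Defs.
From mathcomp Require Import all_boot all_algebra.
From mathcomp Require Import mpoly.
From mathcomp Require Import ring.
Set Implicit Arguments. Unset Strict Implicit. Unset Printing Implicit Defensive.
Import GRing.Theory.
Local Open Scope ring_scope.

Definition toM (s : seq nat) : 'X_{1..5} := [multinom nth 0%N s i | i < 5].
Definition le5 (e u : seq nat) := all (fun j => nth 0%N e j <= nth 0%N u j)%N (iota 0 5).
Definition eq5 (e u : seq nat) := all (fun j => nth 0%N e j == nth 0%N u j) (iota 0 5).
Definition decr (u : seq nat) k := [seq (nth 0%N u j - (j == k))%N | j <- iota 0 5].
Definition sumz (s : seq int) : int := foldr (fun a b => a + b) 0 s.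

Lemma toM_le e u : (toM e <= toM u)%MM = le5 e u.
Proof.
apply/mnm_lepP/allP => [h j|h i].
  rewrite mem_iota add0n => hj; have := h (Ordinal hj); by rewrite !mnmE.
by rewrite !mnmE; apply: h; rewrite mem_iota add0n ltn_ord.
Qed.

Lemma toM_eq e u : (toM e == toM u) = eq5 e u.
Proof.
apply/eqP/allP => [h j|h].
  rewrite mem_iota add0n => hj; have := congr1 (fun m : 'X_{1..5} => m (Ordinal hj)) h.
  by rewrite !mnmE => ->.
apply/mnmP => i; rewrite !mnmE; apply/eqP/h; by rewrite mem_iota add0n ltn_ord.
Qed.

Section S.
Variable F : fieldType.
Implicit Types f h : {mpoly F[5]}.

Lemma coefMX_nle (p : {mpoly F[5]}) m k : ~~ (m <= k)%MM -> (p * 'X_[m])@_k = 0.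
Proof.
move=> hn; apply: memN_msupp_eq0; apply/negP => hk.
have := perm_mem (msuppMX p m) k; rewrite hk => /esym /mapP [m' _ hkm].
by move: hn; rewrite hkm lem_addr.
Qed.

Lemma coefMX_ge (p : {mpoly F[5]}) m k : (m <= k)%MM -> (p * 'X_[m])@_k = p@_(k - m).
Proof. by move=> h; rewrite -{1}(submK h) addmC mcoeffMX. Qed.

Lemma coefXM k u f : (k < 5)%N ->
  ('X_(inord k) * f)@_(toM u) = if (0 < nth 0%N u k)%N then f@_(toM (decr u k)) else 0.
Proof.
move=> hk; rewrite mulrC.
have hU : (U_(inord k) <= toM u)%MM = (0 < nth 0%N u k)%N.
  by rewrite lep1mP mnmE inordK // lt0n.
case: ifP => h; last by rewrite coefMX_nle // hU h.
rewrite coefMX_ge ?hU //; congr (_@_ _); apply/mnmP => i.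
rewrite mnmBE !mnmE (nth_map 0%N) ?size_iota // nth_iota // add0n.
congr (_ - nat_of_bool _)%N; by rewrite -val_eqE /= inordK // eq_sym.
Qed.

Definition Phi (P : seq (int * seq nat)) h := \sum_(p <- P) p.1%:~R * h@_(toM p.2).

Lemma PhiD P a b : Phi P (a + b) = Phi P a + Phi P b.
Proof. by rewrite /Phi -big_split /=; apply: eq_bigr => p _; rewrite mcoeffD mulrDr. Qed.
Lemma PhiN P a : Phi P (- a) = - Phi P a.
Proof. by rewrite /Phi -sumrN; apply: eq_bigr => p _; rewrite mcoeffN mulrN. Qed.
Lemma PhiB P a b : Phi P (a - b) = Phi P a - Phi P b.
Proof. by rewrite PhiD PhiN. Qed.

Definition shift (P : seq (int * seq nat)) k :=
  [seq (p.1, decr p.2 k) | p <- P & (0 < nth 0%N p.2 k)%N].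

Lemma Phi_shift P k f : (k < 5)%N -> Phi P ('X_(inord k) * f) = Phi (shift P k) f.
Proof.
move=> hk; elim: P => [|p P ih]; first by rewrite /Phi !big_nil.
rewrite /Phi big_cons coefXM //; case: ifP => hp; rewrite /shift /= hp ?big_cons /=.
  by congr (_ + _); exact: ih.
by rewrite mulr0 add0r; exact: ih.
Qed.

Lemma Phi_cat P Q f : Phi (P ++ Q) f = Phi P f + Phi Q f.
Proof. by rewrite /Phi big_cat. Qed.

Definition zcheck (Q : seq (int * seq nat)) :=
  all (fun m => sumz [seq q.1 | q <- Q & q.2 == m] == 0) (undup (map snd Q)).

Lemma sumzE (s : seq int) : sumz s = \sum_(x <- s) x.
Proof. by elim: s => [|x s ih]; rewrite ?big_nil ?big_cons //= ih. Qed.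

Lemma partition_sum (Q : seq (int * seq nat)) (G : int * seq nat -> F) :
  \sum_(q <- Q) G q = \sum_(m <- undup (map snd Q)) \sum_(q <- Q | q.2 == m) G q.
Proof.
symmetry.
rewrite (eq_bigr (fun m => \sum_(q <- Q) (if q.2 == m then G q else 0))); last first.
  by move=> m _; rewrite big_mkcond.
rewrite exchange_big /=; apply: eq_big_seq => q hq.
rewrite (bigD1_seq q.2) ?undup_uniq ?mem_undup ?map_f // eqxx big1; first exact: addr0.
by move=> m; rewrite eq_sym => /negbTE ->.
Qed.

Lemma Phi_zero Q f : zcheck Q -> Phi Q f = 0.
Proof.
move=> /allP hz; rewrite /Phi partition_sum.
apply: big1_seq => m /andP [_ /hz /eqP hm].
rewrite (eq_bigr (fun q => q.1%:~R * f@_(toM m))); last by move=> q /eqP ->.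
rewrite -big_distrl /= -big_filter -(big_map fst xpredT (fun x : int => x%:~R)).
rewrite -rmorph_sum /= -sumzE.
by rewrite hm mul0r.
Qed.


Definition gensM (E : seq (seq nat)) : seq {mpoly F[5]} := map (fun e => 'X_[toM e]) E.

Lemma ideal_coef E h u : in_ideal (gensM E) h -> all (fun e => ~~ le5 e u) E -> h@_(toM u) = 0.
Proof.
case=> c -> /allP hE; rewrite raddf_sum /=; apply: big1 => i _.
have hi : (i < size E)%N by rewrite -(size_map (fun e => 'X_[toM e] : {mpoly F[5]})); exact: ltn_ord.
rewrite /gensM (nth_map [::]) // coefMX_nle // toM_le; apply: hE; exact: mem_nth.
Qed.

Lemma Phi_ideal P E h : in_ideal (gensM E) h ->
  all (fun p => all (fun e => ~~ le5 e p.2) E) P -> Phi P h = 0.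
Proof.
move=> hI /allP hP; rewrite /Phi big_seq; apply: big1 => p /hP hp.
by rewrite (ideal_coef hI hp) mulr0.
Qed.

Lemma Phi_X P u : Phi P 'X_[toM u] = (sumz [seq p.1 | p <- P & eq5 u p.2])%:~R.
Proof.
elim: P => [|p P ih]; first by rewrite /Phi big_nil.
rewrite /Phi big_cons -/(Phi P _) ih mcoeffX toM_eq /=.
by case: (eq5 u p.2) => /=; rewrite ?rmorphD ?mulr1 ?mulr0 ?add0r.
Qed.

Definition poly_of (Q : seq (int * seq nat)) : {mpoly F[5]} :=
  \sum_(q <- Q) q.1%:~R *: 'X_[toM q.2].

Lemma poly_of_coef Q u : (poly_of Q)@_(toM u) = (sumz [seq q.1 | q <- Q & eq5 q.2 u])%:~R.
Proof.
elim: Q => [|q Q ih]; first by rewrite /poly_of big_nil mcoeff0.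
rewrite /poly_of big_cons mcoeffD -/(poly_of Q) ih mcoeffZ mcoeffX toM_eq /=.
by case: (eq5 q.2 u) => /=; rewrite ?rmorphD ?mulr1 ?mulr0 ?add0r.
Qed.

Definition deg5 (s : seq nat) := sumn (map (nth 0%N s) (iota 0 5)).

Lemma mdeg_toM s : mdeg (toM s) = deg5 s.
Proof.
rewrite mdegE /deg5 sumnE big_map. rewrite (eq_bigr (fun i : 'I_5 => nth 0%N s i)); last by move=> i _; rewrite mnmE.
by rewrite -(big_mkord xpredT (nth 0%N s)) /index_iota subn0.
Qed.

Lemma poly_of_homog Q d : all (fun q => deg5 q.2 == d) Q -> poly_of Q \is d.-homog.
Proof.
move=> /allP hQ; rewrite /poly_of big_seq.
apply: (big_ind (fun p : {mpoly F[5]} => p \is d.-homog)); first exact: dhomog0.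
  exact: dhomogD.
move=> q /hQ hq; apply: dhomogZ; rewrite dhomogX; by move: hq; rewrite -mdeg_toM.
Qed.

Lemma toMX s : 'X_[toM s] = x5 F 0 ^+ nth 0%N s 0 * x5 F 1 ^+ nth 0%N s 1 *
   x5 F 2 ^+ nth 0%N s 2 * x5 F 3 ^+ nth 0%N s 3 * x5 F 4 ^+ nth 0%N s 4.
Proof.
rewrite mpolyXE_id !big_ord_recr big_ord0 /x5 !mnmE /= Monoid.mul1m.
repeat congr (_ * _); congr ('X_ _ ^+ _); apply/val_inj; by rewrite /= inordK.
Qed.

Lemma linE : lin_form F 5 = x5 F 0 + x5 F 1 + x5 F 2 + x5 F 3 + x5 F 4.
Proof.
rewrite /lin_form !big_ord_recr big_ord0 /x5.
rewrite /= add0r. repeat congr (_ + _); congr ('X_ _); apply/val_inj; by rewrite /= inordK.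
Qed.

Lemma Phi_lin P f : (Phi P (lin_form F 5 * f) =
  Phi (shift P 0 ++ shift P 1 ++ shift P 2 ++ shift P 3 ++ shift P 4) f)%N.
Proof.
rewrite linE /x5 !mulrDl !PhiD !Phi_shift // !Phi_cat.
by rewrite !addrA.
Qed.

End S.

Definition PHI : seq (int * seq nat) := [:: (Negz 0, [:: 0; 2; 0; 1; 2]); (Posz 1, [:: 0; 2; 0; 2; 1]); (Posz 1, [:: 0; 2; 1; 0; 2]); (Negz 0, [:: 0; 2; 1; 2; 0]); (Negz 0, [:: 0; 2; 2; 0; 1]); (Posz 1, [:: 0; 2; 2; 1; 0]); (Posz 1, [:: 1; 1; 0; 1; 2]); (Negz 0, [:: 1; 1; 0; 2; 1]); (Negz 0, [:: 1; 1; 1; 0; 2]); (Posz 1, [:: 1; 1; 1; 2; 0]); (Posz 1, [:: 1; 1; 2; 0; 1]); (Negz 0, [:: 1; 1; 2; 1; 0]); (Negz 0, [:: 2; 0; 0; 1; 2]); (Posz 1, [:: 2; 0; 0; 2; 1]); (Posz 1, [:: 2; 0; 1; 0; 2]); (Negz 0, [:: 2; 0; 1; 2; 0]); (Negz 0, [:: 2; 0; 2; 0; 1]); (Posz 1, [:: 2; 0; 2; 1; 0])].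
Definition EI : seq (seq nat) := [:: [:: 3; 0; 0; 0; 0]; [:: 0; 3; 0; 0; 0]; [:: 0; 0; 3; 0; 0]; [:: 0; 0; 0; 3; 0]; [:: 0; 0; 0; 0; 3]; [:: 2; 1; 0; 0; 0]; [:: 1; 2; 0; 0; 0]].
Definition EJ : seq (seq nat) := [:: [:: 3; 0; 0; 0; 0]; [:: 0; 3; 0; 0; 0]; [:: 0; 0; 3; 0; 0]; [:: 0; 0; 0; 3; 0]; [:: 0; 0; 0; 0; 3]; [:: 2; 1; 0; 0; 0]; [:: 1; 2; 0; 0; 0]; [:: 0; 0; 1; 1; 1]].
Definition QI : seq (int * seq nat) := [:: (Posz 1, [:: 2; 0; 0; 2; 0]); (Negz 0, [:: 2; 0; 0; 1; 1]); (Posz 1, [:: 2; 0; 0; 0; 2]); (Posz 2, [:: 1; 1; 0; 2; 0]); (Negz 1, [:: 1; 1; 0; 1; 1]); (Posz 2, [:: 1; 1; 0; 0; 2]); (Posz 1, [:: 0; 2; 0; 2; 0]); (Negz 0, [:: 0; 2; 0; 1; 1]); (Posz 1, [:: 0; 2; 0; 0; 2]); (Negz 0, [:: 1; 0; 1; 2; 0]); (Posz 1, [:: 1; 0; 1; 1; 1]); (Negz 0, [:: 1; 0; 1; 0; 2]); (Negz 0, [:: 0; 1; 1; 2; 0]); (Posz 1, [:: 0; 1; 1; 1; 1]); (Negz 0, [:: 0; 1; 1; 0; 2]); (Posz 1, [:: 0; 0; 2; 2; 0]); (Negz 0, [:: 0; 0; 2; 1; 1]); (Posz 1, [:: 0;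 0; 2; 0; 2])].
Definition QJ : seq (int * seq nat) := [:: (Posz 1, [:: 0; 2; 2; 0; 0]); (Posz 1, [:: 0; 2; 0; 2; 0]); (Posz 1, [:: 0; 2; 0; 0; 2]); (Negz 0, [:: 0; 2; 1; 1; 0]); (Negz 0, [:: 0; 2; 1; 0; 1]); (Negz 0, [:: 0; 2; 0; 1; 1])].

Lemma gensI_eq (F : fieldType) : gens_I F = gensM F EI.
Proof.
rewrite /gens_I /gensM /EI /= !toMX /=.
by rewrite !expr0 !expr1 !mulr1 !mul1r.
Qed.

Lemma gensJ_eq (F : fieldType) : gens_J F = gensM F EJ.
Proof.
rewrite /gens_J /gens_I /gensM /EJ /= !toMX /=.
by rewrite !expr0 !expr1 !mulr1 !mul1r.
Qed.

Lemma chkI : all (fun p => all (fun e => ~~ le5 e p.2) EI) PHI.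
Proof. by vm_compute. Qed.
Lemma chkJ : all (fun p => all (fun e => ~~ le5 e p.2) EJ) PHI.
Proof. by vm_compute. Qed.
Lemma chkZ : zcheck (shift PHI 0 ++ shift PHI 1 ++ shift PHI 2 ++ shift PHI 3 ++ shift PHI 4).
Proof. by vm_compute. Qed.
Lemma chkS : sumz [seq p.1 | p <- PHI & eq5 [:: 0; 2; 0; 2; 1] p.2] = 1.
Proof. by vm_compute. Qed.

Lemma nonsurj (F : fieldType) E : all (fun p => all (fun e => ~~ le5 e p.2) E) PHI ->
  ~ mult_surjective (gensM F E) (lin_form F 5) 4.
Proof.
move=> hE H.
have hg : ('X_[toM [:: 0; 2; 0; 2; 1]] : {mpoly F[5]}) \is 5.-homog.
  by rewrite dhomogX -[X in X == _]/(mdeg (toM [:: 0; 2; 0; 2; 1])) mdeg_toM.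
case: (H _ hg) => f [_ hf].
have := Phi_ideal hf hE.
rewrite PhiB Phi_lin (Phi_zero _ chkZ) subr0 Phi_X chkS.
by move/eqP; rewrite oner_eq0.
Qed.

Unset Implicit Arguments.

Lemma noninj (F : fieldType) E Q u :
  poly_of F Q \is 4.-homog -> in_ideal (gensM F E) (lin_form F 5 * poly_of F Q) ->
  all (fun e => ~~ le5 e u) E -> sumz [seq q.1 | q <- Q & eq5 q.2 u] = 1 ->
  ~ mult_injective (gensM F E) (lin_form F 5) 4.
Proof.
move=> hh hin hu hs H; have := H _ hh hin.
move/ideal_coef => /(_ u hu); rewrite poly_of_coef hs.
by move/eqP; rewrite oner_eq0.
Qed.

Lemma inI (F : fieldType) : in_ideal (gens_I F) (lin_form F 5 * poly_of F QI).
Proof.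
pose a := x5 F 0 + x5 F 1. pose c := x5 F 2.
pose P := a ^+ 2 - a * c + c ^+ 2. pose Q := x5 F 3 ^+ 2 - x5 F 3 * x5 F 4 + x5 F 4 ^+ 2.
exists (fun i : 'I_7 => nth 0 [:: Q; Q; Q; P; P; 3%:R * Q; 3%:R * Q] i).
rewrite !big_ord_recr big_ord0 /= /poly_of /QI !big_cons big_nil !toMX linE /=.
rewrite /P /Q /a /c.
rewrite !scaler_int. ring.
Qed.

Lemma inJ (F : fieldType) : in_ideal (gens_J F) (lin_form F 5 * poly_of F QJ).
Proof.
pose q := x5 F 2 ^+ 2 + x5 F 3 ^+ 2 + x5 F 4 ^+ 2 - x5 F 2 * x5 F 3 - x5 F 2 * x5 F 4 - x5 F 3 * x5 F 4.
pose b := x5 F 1 ^+ 2.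
exists (fun i : 'I_8 => nth 0 [:: 0; q; b; b; b; 0; q; - 3%:R * b] i).
rewrite !big_ord_recr big_ord0 /= /poly_of /QJ !big_cons big_nil !toMX linE /=.
rewrite /q /b !scaler_int. ring.
Qed.

Theorem lemma4p7 (F : fieldType) (hchar : [pchar F] =i pred0) :
  fails_WLP_in_degree (gens_I F) 4 /\ fails_WLP_in_degree (gens_J F) 4.
Proof.
rewrite /fails_WLP_in_degree.
split; split.
- have := inI F; rewrite gensI_eq => hin.
  apply: (noninj _ _ _ [:: 0; 0; 2; 0; 2]%N _ hin).
  + by apply: poly_of_homog; vm_compute.
  + by vm_compute.
  + by vm_compute.
- rewrite gensI_eq; apply: nonsurj; exact: chkI.
- have := inJ F; rewrite gensJ_eq => hin.
  apply: (noninj _ _ _ [:: 0; 2; 0; 0; 2]%N _ hin).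
  + by apply: poly_of_homog; vm_compute.
  + by vm_compute.
  + by vm_compute.
- rewrite gensJ_eq; apply: nonsurj; exact: chkJ.
Qed.
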